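(* Let $s$ be a Sturmian word and $t\in\{a,b\}^{\omega}$ with $R(t)=s$, where $R$ is the morphism $R(a)=a$, $R(b)=ba$. Suppose that either (1) the first letter of $t$ is $b$, or (2) $s$ admits a factorization $s=U_1U_2\cdots U_n\cdots$ where each $U_i$ is a non-empty prefix of $s$ ending in the letter $a$ and $r_s(U_i)=r_s(U_j)$ for all $i,j\ge1$. Then $t$ is a Sturmian word.
   Context: A Sturmian word is an infinite word $s\in\{a,b\}^{\omega}$ that is aperiodic (not ultimately periodic) and balanced: for all factors $u,v$ of $s$ with $|u|=|v|$ one has $||u|_x-|v|_x|\le 1$ for $x\in\{a,b\}$, where $|u|_x$ is the number of occurrences of $x$ in $u$. A non-empty factor $w$ of $s$ is rich in the letter $z\in\{a,b\}$ if there is a factor $v$ of $s$ with $|v|=|w|$ and $|w|_z>|v|_z$; every non-empty factor of a Sturmian word is rich in exactly one letter, and $r_s(w)\in\{a,b\}$ denotes that letter. *)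

(* Defs.v *)
From Stdlib Require Import List Arith Lia.
Import ListNotations.

Inductive letter := La | Lb.

Definition letter_eqb (x y : letter) : bool :=
  match x, y with La, La | Lb, Lb => true | _, _ => false end.

Definition word := nat -> letter.

Definition cnt (z : letter) (w : list letter) : nat :=
  length (filter (fun x => letter_eqb x z) w).

Definition fac (s : word) (i n : nat) : list letter :=
  map (fun k => s (i + k)) (seq 0 n).

Definition is_factor (s : word) (w : list letter) : Prop :=
  exists i, w = fac s i (length w).

Definition is_prefix (s : word) (w : list letter) : Prop :=
  w = fac s 0 (length w).

Definition ult_periodic (s : word) : Prop :=
  exists p N, 0 < p /\ forall n, N <= n -> s (n + p) = s n.

Definition balanced (s : word) : Prop :=
  forall u v, is_factor s u -> is_factor s v -> length u = length v ->
    forall x, cnt x u <= cnt x v + 1 /\ cnt x v <= cnt x u + 1.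

Definition sturmian (s : word) : Prop := ~ ult_periodic s /\ balanced s.

Definition rich (s : word) (z : letter) (w : list letter) : Prop :=
  w <> [] /\ is_factor s w /\
  exists v, is_factor s v /\ length v = length w /\ cnt z w > cnt z v.

Fixpoint start (U : nat -> list letter) (i : nat) : nat :=
  match i with 0 => 0 | S j => start U j + length (U j) end.

(* s = U 0 U 1 U 2 ... (infinite concatenation of non-empty finite words) *)
Definition is_concat (s : word) (U : nat -> list letter) : Prop :=
  (forall i, U i <> []) /\
  forall i k, k < length (U i) -> s (start U i + k) = nth k (U i) La.

Definition Rm (x : letter) : list letter :=
  match x with La => [La] | Lb => [Lb; La] end.

Definition R_image (t s : word) : Prop := is_concat s (fun i => Rm (t i)).

(* Main.v *)
Require Import Defs.
From Stdlib Require Import List Arith Lia Classical.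
Import ListNotations.

Definition ind (x z : letter) : nat := if letter_eqb x z then 1 else 0.

Fixpoint C (z : letter) (w : word) (i n : nat) : nat :=
  match n with 0 => 0 | S n' => C z w i n' + ind (w (i + n')) z end.

Lemma C_cnt z w i n : C z w i n = cnt z (fac w i n).
Proof.
  induction n as [|n IH]; [reflexivity|].
  unfold fac, cnt in *. rewrite seq_S, map_app, filter_app, length_app.
  simpl C. rewrite IH. f_equal. simpl. unfold ind.
  destruct (letter_eqb (w (i + n)) z); reflexivity.
Qed.

Lemma length_fac w i n : length (fac w i n) = n.
Proof. unfold fac. rewrite length_map, length_seq. reflexivity. Qed.

Lemma nth_fac w i n r d : r < n -> nth r (fac w i n) d = w (i + r).
Proof.
  intro H. unfold fac. rewrite (nth_indep (map (fun k => w (i + k)) (seq 0 n)) d (w (i + 0))).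
  - rewrite (map_nth (fun k => w (i + k))). rewrite seq_nth by exact H. reflexivity.
  - rewrite length_map, length_seq. exact H.
Qed.

Lemma C_add z w i a b : C z w i (a + b) = C z w i a + C z w (i + a) b.
Proof.
  induction b as [|b IH].
  - simpl. rewrite Nat.add_0_r. lia.
  - rewrite Nat.add_succ_r. simpl. rewrite IH. rewrite Nat.add_assoc. lia.
Qed.

Lemma C_S z w i n : C z w i (S n) = ind (w i) z + C z w (S i) n.
Proof.
  change (S n) with (1 + n). rewrite C_add. simpl. rewrite Nat.add_0_r.
  replace (i + 1) with (S i) by lia. reflexivity.
Qed.

Definition oth (z : letter) := match z with La => Lb | Lb => La end.

Lemma C_oth z w i n : C z w i n + C (oth z) w i n = n.
Proof.
  induction n as [|n IH]; simpl; [reflexivity|].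
  unfold ind. destruct z, (w (i + n)); simpl in *; lia.
Qed.

Lemma C_ext z w w' i j n : (forall r, r < n -> w (i + r) = w' (j + r)) ->
  C z w i n = C z w' j n.
Proof.
  induction n as [|n IH]; intro H; simpl; [reflexivity|].
  rewrite IH by (intros; apply H; lia). rewrite H by lia. reflexivity.
Qed.

Lemma C_le z w i n : C z w i n <= n.
Proof.
  induction n; simpl; [lia|]. unfold ind. destruct (letter_eqb _ _); lia.
Qed.

Lemma ind_inj x y z : ind x z = ind y z -> x = y.
Proof. unfold ind; destruct x, y, z; simpl; congruence. Qed.

Definition balz (s : word) := forall z i j n, C z s i n <= C z s j n + 1.

Lemma bal_balz s : balanced s -> balz s.
Proof.
  intros H z i j n. rewrite !C_cnt.
  assert (Hf : forall k, is_factor s (fac s k n)).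
  { intro k. exists k. rewrite length_fac. reflexivity. }
  apply (H _ _ (Hf i) (Hf j)). rewrite !length_fac. reflexivity.
Qed.

Lemma per_lemma s z n X : 1 <= n ->
  (forall y, X <= y -> C z s (S y) n = C z s y n) -> ult_periodic s.
Proof.
  intros Hn H. exists n, X. split; [lia|]. intros y Hy.
  pose proof (C_S z s y n) as E1. simpl in E1.
  rewrite H in E1 by exact Hy.
  assert (ind (s y) z = ind (s (y + n)) z) by lia.
  symmetry. apply (ind_inj _ _ z). exact H0.
Qed.

Lemma aper_lemma s z n p : ~ ult_periodic s -> 1 <= n ->
  exists x, C z s x n <> C z s p n.
Proof.
  intros Hnp Hn. apply NNPP. intro Hc. apply Hnp.
  apply (per_lemma s z n 0 Hn). intros y _.
  assert (forall x, C z s x n = C z s p n).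
  { intro x. apply NNPP. intro H'. apply Hc. exists x. exact H'. }
  rewrite (H (S y)), (H y). reflexivity.
Qed.

Lemma stretch_periodic s z n : balz s -> 1 <= n ->
  (forall T, exists x, (forall y, C z s x n <= C z s y n) /\
      forall i, i < T -> C z s (x + i) n = C z s x n) ->
  ult_periodic s.
Proof.
  intros Hb Hn HT.
  destruct (HT 0) as [x0 [Hmin0 _]].
  remember (C z s x0 n) as m eqn:Hm.
  apply NNPP; intro Hnp.
  assert (Step1 : forall X, exists y, X <= y /\ C z s y n <> m).
  { intro X. apply NNPP; intro Hc. apply Hnp.
    apply (per_lemma s z n X Hn). intros y Hy.
    assert (E : forall y', X <= y' -> C z s y' n = m).
    { intros y' Hy'. apply NNPP; intro H'. apply Hc. exists y'. split; assumption. }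
    rewrite (E (S y)) by lia. rewrite (E y) by lia. reflexivity. }
  set (INF := fun r => forall X, exists y, X <= y /\ y mod n = r /\ C z s y n <> m).
  assert (Step2 : forall k, k <= n -> (exists r, INF r) \/
            (exists X, forall y, X <= y -> y mod n < k -> C z s y n = m)).
  { induction k as [|k IH]; intro Hk.
    - right. exists 0. intros. lia.
    - destruct (IH ltac:(lia)) as [L|[X1 HX1]]; [left; exact L|].
      destruct (classic (INF k)) as [Hi|Hni]; [left; exists k; exact Hi|].
      right. unfold INF in Hni. apply not_all_ex_not in Hni. destruct Hni as [X2 HX2].
      exists (X1 + X2). intros y Hy Hyk.
      destruct (Nat.eq_dec (y mod n) k) as [E|E].
      + apply NNPP; intro H'. apply HX2. exists y. repeat split; try assumption. lia.
      + apply HX1; lia. }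
  destruct (Step2 n (le_n n)) as [[r Hr]|[X HX]].
  2:{ destruct (Step1 X) as [y [Hy1 Hy2]]. apply Hy2. apply HX; [exact Hy1|].
      apply Nat.mod_upper_bound. lia. }
  destruct (Hr 0) as [y1 [_ [Hr1 Hc1]]].
  destruct (Hr (S y1)) as [y2 [Hy2 [Hr2 Hc2]]].
  pose proof (Hmin0 y1) as M1. pose proof (Hmin0 y2) as M2.
  pose proof (Nat.div_mod_eq y1 n) as D1. pose proof (Nat.div_mod_eq y2 n) as D2.
  rewrite Hr1 in D1. rewrite Hr2 in D2.
  set (q1 := y1 / n) in *. set (q2 := y2 / n) in *.
  assert (Hq : q1 < q2) by nia.
  set (j := q2 - q1 - 1).
  assert (Ey2 : y2 = y1 + n + j * n) by (unfold j; nia).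
  destruct (HT (S j * n + 1)) as [x [Hminx Hstr]].
  assert (Cx : C z s x n = m).
  { pose proof (Hminx x0). pose proof (Hmin0 x). lia. }
  assert (A : forall l, l <= S (S j) -> C z s x (l * n) = l * m).
  { induction l as [|l IH]; intro Hl; [reflexivity|].
    rewrite (Nat.mul_succ_l l n). idtac. rewrite C_add. rewrite IH by lia.
    rewrite Hstr by nia. rewrite Cx. lia. }
  assert (Bg : forall y l, l * m <= C z s y (l * n)).
  { intros y l. revert y. induction l as [|l IH]; intro y; [simpl; lia|].
    rewrite (Nat.mul_succ_l l n), C_add. pose proof (IH y). pose proof (Hmin0 (y + l * n)).
    lia. }
  assert (E1 : S (S j) * n = n + (j * n + n)) by nia.
  pose proof (Hb z y1 x (S (S j) * n)) as Hbal.
  rewrite (A (S (S j))) in Hbal by lia.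
  rewrite E1, C_add, C_add in Hbal.
  replace (y1 + n + j * n) with y2 in Hbal by lia.
  pose proof (Bg (y1 + n) j).
  assert (m < C z s y1 n) by lia. assert (m < C z s y2 n) by lia.
  nia.
Qed.

Fixpoint sumf (f : nat -> nat) (n : nat) : nat :=
  match n with 0 => 0 | S n' => sumf f n' + f n' end.

Lemma sum_le1 f g T : (forall M, M < T -> f M <= g M + 1) -> sumf f T <= sumf g T + T.
Proof.
  induction T as [|T IH]; intro H; simpl; [lia|].
  pose proof (IH (fun M HM => H M ltac:(lia))). pose proof (H T ltac:(lia)). lia.
Qed.

Lemma sum_mono f g T : (forall M, M < T -> g M <= f M) -> sumf g T <= sumf f T.
Proof.
  induction T as [|T IH]; intro H; simpl; [lia|].
  pose proof (IH (fun M HM => H M ltac:(lia))). pose proof (H T ltac:(lia)). lia.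
Qed.

Lemma sum_inc f g T : (forall M, M < T -> g M <= f M) ->
  (exists i, i < T /\ g i < f i) -> sumf g T + 1 <= sumf f T.
Proof.
  induction T as [|T IH]; intros H [i [Hi Hgi]]; simpl; [lia|].
  destruct (Nat.eq_dec i T) as [E|E].
  - subst i. pose proof (sum_mono f g T (fun M HM => H M ltac:(lia))). lia.
  - assert (Hi' : i < T) by lia.
    pose proof (IH (fun M HM => H M ltac:(lia)) (ex_intro _ i (conj Hi' Hgi))).
    pose proof (H T ltac:(lia)). lia.
Qed.

Lemma tiling s z (p nn : nat -> nat) N : balz s -> ~ ult_periodic s ->
  (forall k, 1 <= nn k /\ nn k < N) -> (forall k, p (S k) = p k + nn k) ->
  (forall k x, C z s (p k) (nn k) <= C z s x (nn k)) -> False.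
Proof.
  intros Hb Hnp Hn Hp Hmin.
  assert (Q : forall n, 1 <= n -> exists T, forall x, (forall y, C z s x n <= C z s y n) ->
             exists i, i < T /\ C z s (x + i) n <> C z s x n).
  { intros n Hn1. apply NNPP; intro Hc. apply Hnp. apply (stretch_periodic s z n Hb Hn1).
    intro T. apply NNPP; intro Hc2. apply Hc. exists T. intros x Hx.
    apply NNPP; intro Hc3. apply Hc2. exists x. split; [exact Hx|].
    intros i Hi. apply NNPP; intro Hc4. apply Hc3. exists i. split; assumption. }
  assert (U : forall M, exists T, forall n, 1 <= n -> n < M -> forall x,
             (forall y, C z s x n <= C z s y n) ->
             exists i, i < T /\ C z s (x + i) n <> C z s x n).
  { induction M as [|M IH].
    - exists 0. intros. lia.
    - destruct IH as [T1 HT1].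
      destruct (Nat.eq_dec M 0) as [E|E].
      + exists T1. intros. lia.
      + destruct (Q M ltac:(lia)) as [T2 HT2]. exists (T1 + T2).
        intros n Hn1 HnM x Hx.
        destruct (Nat.eq_dec n M) as [E2|E2].
        * subst n. destruct (HT2 x Hx) as [i [Hi Hi2]]. exists i. split; [lia|exact Hi2].
        * destruct (HT1 n Hn1 ltac:(lia) x Hx) as [i [Hi Hi2]]. exists i. split; [lia|exact Hi2]. }
  destruct (U N) as [T HT].
  set (Phi := fun q => sumf (fun M => C z s q M) T).
  assert (Inc : forall k, Phi (p k) + 1 <= Phi (p (S k))).
  { intro k. unfold Phi. apply sum_inc.
    - intros M _. rewrite Hp.
      pose proof (C_add z s (p k) (nn k) M) as E1.
      pose proof (C_add z s (p k) M (nn k)) as E2.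
      rewrite Nat.add_comm in E2. pose proof (Hmin k (p k + M)). lia.
    - destruct (HT (nn k) ltac:(apply Hn) ltac:(apply Hn) (p k) (Hmin k)) as [i [Hi Hi2]].
      exists i. split; [exact Hi|]. rewrite Hp.
      pose proof (C_add z s (p k) (nn k) i) as E1.
      pose proof (C_add z s (p k) i (nn k)) as E2.
      rewrite Nat.add_comm in E2. pose proof (Hmin k (p k + i)). lia. }
  assert (Tot : forall K, Phi (p 0) + K <= Phi (p K)).
  { induction K as [|K IH]; [lia|]. pose proof (Inc K). lia. }
  assert (Up : Phi (p (S T)) <= Phi (p 0) + T).
  { unfold Phi. apply sum_le1. intros M _. apply Hb. }
  pose proof (Tot (S T)). lia.
Qed.

Lemma ind_le x z : ind x z <= 1.
Proof. unfold ind; destruct (letter_eqb x z); lia. Qed.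
Lemma ind1 x : ind x Lb = 1 -> x = Lb.
Proof. unfold ind; destruct x; simpl; intro; congruence. Qed.
Lemma ind0 x : ind x Lb = 0 -> x = La.
Proof. unfold ind; destruct x; simpl; intro; congruence. Qed.
Lemma C_Sr z w i n : C z w i (S n) = C z w i n + ind (w (i + n)) z.
Proof. reflexivity. Qed.

Lemma min_unbal w : forall n i j, C Lb w j n + 2 <= C Lb w i n ->
  exists i' j' m, w i' = Lb /\ w (i' + S m) = Lb /\ w j' = La /\ w (j' + S m) = La /\
     C Lb w (S i') m = C Lb w (S j') m.
Proof.
  induction n as [|n IH]; intros i j H; [simpl in H; lia|].
  destruct (le_lt_dec (C Lb w (S j) n + 2) (C Lb w (S i) n)) as [A|A].
  { apply (IH _ _ A). }
  destruct (le_lt_dec (C Lb w j n + 2) (C Lb w i n)) as [B|B].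
  { apply (IH _ _ B). }
  pose proof (C_S Lb w i n) as Si. pose proof (C_S Lb w j n) as Sj.
  pose proof (C_Sr Lb w i n) as Ri. pose proof (C_Sr Lb w j n) as Rj.
  pose proof (ind_le (w i) Lb). pose proof (ind_le (w j) Lb).
  pose proof (ind_le (w (i + n)) Lb). pose proof (ind_le (w (j + n)) Lb).
  destruct n as [|m].
  { simpl in *. lia. }
  pose proof (C_S Lb w i m) as Si'. pose proof (C_S Lb w j m) as Sj'.
  exists i, j, m.
  repeat split.
  - apply ind1; lia.
  - apply ind1; lia.
  - apply ind0; lia.
  - apply ind0; lia.
  - lia.
Qed.

Notation St t := (start (fun i => Rm (t i))).

Lemma len_Rm x : length (Rm x) = S (ind x Lb).
Proof. destruct x; reflexivity. Qed.

Lemma St_S (t : word) k : St t (S k) = St t k + S (ind (t k) Lb).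
Proof. simpl. rewrite len_Rm. reflexivity. Qed.

Lemma St_add (t : word) i n : St t (i + n) = St t i + n + C Lb t i n.
Proof.
  induction n as [|n IH]; [rewrite Nat.add_0_r; simpl; lia|].
  rewrite Nat.add_succ_r, St_S, IH. simpl. lia.
Qed.

Lemma s_block (s t : word) (HR : R_image t s) k r : r < length (Rm (t k)) -> s (St t k + r) = nth r (Rm (t k)) La.
Proof. intro H. apply (proj2 HR k r H). Qed.

Lemma blockC (s t : word) (HR : R_image t s) k : C Lb s (St t k) (S (ind (t k) Lb)) = ind (t k) Lb.
Proof.
  pose proof (s_block s t HR k) as B. rewrite len_Rm in B.
  destruct (t k) eqn:E; unfold ind in *; simpl in *.
  - rewrite (B 0) by lia. reflexivity.
  - rewrite (B 0) by lia. rewrite (B 1) by lia. reflexivity.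
Qed.

Lemma L_Cs (s t : word) (HR : R_image t s) i n : C Lb s (St t i) (n + C Lb t i n) = C Lb t i n.
Proof.
  induction n as [|n IH]; [reflexivity|].
  simpl C at 2 3.
  replace (S n + (C Lb t i n + ind (t (i + n)) Lb)) with
    ((n + C Lb t i n) + S (ind (t (i + n)) Lb)) by lia.
  rewrite C_add, IH. rewrite Nat.add_assoc, <- St_add. rewrite (blockC s t HR). reflexivity.
Qed.

Lemma L_last (s t : word) (HR : R_image t s) k : s (St t (S k) - 1) = La.
Proof.
  rewrite St_S. pose proof (s_block s t HR k (ind (t k) Lb)) as B.
  rewrite len_Rm in B. replace (St t k + S (ind (t k) Lb) - 1) with (St t k + ind (t k) Lb) by lia.
  rewrite B by lia. destruct (t k); reflexivity.
Qed.

Lemma decomp (t : word) x : exists i r, x = St t i + r /\ r < length (Rm (t i)).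
Proof.
  induction x as [|x [i [r [E H]]]].
  - exists 0, 0. split; [reflexivity|]. rewrite len_Rm. lia.
  - rewrite len_Rm in H. destruct (Nat.eq_dec r (ind (t i) Lb)) as [Er|Er].
    + exists (S i), 0. rewrite St_S, len_Rm. split; lia.
    + exists i, (S r). rewrite len_Rm. split; lia.
Qed.

Lemma t_aper (s t : word) (HR : R_image t s) : ult_periodic t -> ult_periodic s.
Proof.
  intros [p [N0 [Hp HP]]].
  assert (Cc : forall d, C Lb t (N0 + d) p = C Lb t N0 p).
  { induction d as [|d IH]; [rewrite Nat.add_0_r; reflexivity|].
    rewrite <- IH. pose proof (C_S Lb t (N0 + d) p) as E. simpl in E.
    rewrite HP in E by lia. rewrite Nat.add_succ_r. lia. }
  exists (p + C Lb t N0 p), (St t N0). split; [lia|].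
  intros x Hx. destruct (decomp t x) as [i [r [E H]]].
  assert (Hi : N0 <= i).
  { destruct (le_lt_dec N0 i) as [L|L]; [exact L|].
    pose proof (St_add t (S i) (N0 - S i)) as E2. replace (S i + (N0 - S i)) with N0 in E2 by lia.
    rewrite St_S in E2. rewrite len_Rm in H. lia. }
  pose proof (St_add t i p) as E3.
  replace (C Lb t i p) with (C Lb t N0 p) in E3
    by (replace i with (N0 + (i - N0)) by lia; rewrite Cc; reflexivity).
  pose proof (HP i Hi) as Ht.
  subst x. replace (St t i + r + (p + C Lb t N0 p)) with (St t (i + p) + r) by lia.
  rewrite !(s_block s t HR); [rewrite Ht; reflexivity| exact H | rewrite Ht; exact H].
Qed.


Lemma nth_last (l : list letter) d d' : l <> [] -> nth (length l - 1) l d = last l d'.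
Proof.
  induction l as [|x l IH]; intro H; [congruence|].
  destruct l as [|y l']; [reflexivity|].
  simpl length in *. replace (S (S (length l')) - 1) with (S (length l')) by lia.
  change (nth (S (length l')) (x :: y :: l') d) with (nth (length l') (y :: l') d).
  change (last (x :: y :: l') d') with (last (y :: l') d').
  rewrite <- IH by congruence. simpl length. f_equal. lia.
Qed.

Lemma case2 s U N B : balz s -> ~ ult_periodic s -> is_concat s U ->
  (forall i, is_prefix s (U i) /\ last (U i) Lb = La) ->
  (forall i j z, rich s z (U i) <-> rich s z (U j)) ->
  C Lb s 0 N = B -> (forall x, B + 1 <= C Lb s x (S N)) -> False.
Proof.
  intros Hb Hnp [Hne Hlet] Hp Hr HB Hbad.
  assert (PL : forall i r, r < length (U i) -> nth r (U i) La = s r).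
  { intros i r Hr'. rewrite (proj1 (Hp i)) at 1. rewrite nth_fac; [reflexivity|exact Hr']. }
  assert (BL : forall i r, r < length (U i) -> s (start U i + r) = s (0 + r)).
  { intros i r Hr'. rewrite Hlet by exact Hr'. apply PL. exact Hr'. }
  assert (CB : forall i z, cnt z (U i) = C z s (start U i) (length (U i))).
  { intros i z. rewrite (proj1 (Hp i)) at 1. rewrite <- C_cnt. symmetry. apply C_ext.
    intros r Hr'. apply BL. exact Hr'. }
  assert (RM : forall i z, rich s z (U i) -> forall x,
             C z s x (length (U i)) <= C z s (start U i) (length (U i))).
  { intros i z [_ [_ [v [[y Hv] [Hl Hgt]]]]] x.
    rewrite Hl in Hv. subst v. rewrite CB, <- C_cnt in Hgt.
    pose proof (Hb z x y (length (U i))). lia. }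
  assert (LP : forall k, 1 <= length (U k)).
  { intro k. pose proof (Hne k). destruct (U k); [congruence|simpl; lia]. }
  assert (BA : forall k, s (start U (S k) - 1) = La).
  { intro k. simpl. pose proof (LP k).
    replace (start U k + length (U k) - 1) with (start U k + (length (U k) - 1)) by lia.
    rewrite Hlet by lia. rewrite (nth_last _ La Lb) by apply Hne. apply Hp. }
  assert (Bd : forall k, length (U (S k)) < N).
  { intro k. destruct (le_lt_dec N (length (U (S k)))) as [L|L]; [|exact L].
    exfalso. set (p := start U (S k)).
    assert (Hp1 : 1 <= p) by (unfold p; simpl; pose proof (LP k); lia).
    assert (E : C Lb s p N = C Lb s 0 N) by (apply C_ext; intros r Hr'; apply BL; lia).
    pose proof (Hbad (p - 1)) as H1. rewrite C_S in H1.
    replace (S (p - 1)) with p in H1 by lia. assert (Ea : s (p - 1) = La) by apply BA. rewrite Ea in H1. cbv [ind letter_eqb] in H1.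
    simpl in H1. lia. }
  assert (Ez : exists z, rich s z (U 1)).
  { destruct (aper_lemma s Lb (length (U 1)) (start U 1) Hnp (LP 1)) as [x Hx].
    pose proof (C_oth Lb s x (length (U 1))) as O1.
    pose proof (C_oth Lb s (start U 1) (length (U 1))) as O2. simpl oth in O1, O2.
    assert (F : is_factor s (fac s x (length (U 1)))) by (exists x; rewrite length_fac; reflexivity).
    assert (F1 : is_factor s (U 1)) by (exists 0; apply Hp).
    destruct (le_lt_dec (C Lb s x (length (U 1))) (C Lb s (start U 1) (length (U 1)))) as [L|L].
    - exists Lb. split; [apply Hne|]. split; [exact F1|].
      exists (fac s x (length (U 1))). split; [exact F|]. split; [apply length_fac|].
      rewrite CB, <- C_cnt. lia.
    - exists La. split; [apply Hne|]. split; [exact F1|].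
      exists (fac s x (length (U 1))). split; [exact F|]. split; [apply length_fac|].
      rewrite CB, <- C_cnt. lia. }
  destruct Ez as [z Hz].
  apply (tiling s (oth z) (fun k => start U (S k)) (fun k => length (U (S k))) N Hb Hnp).
  - intro k. split; [apply LP|apply Bd].
  - intro k. reflexivity.
  - intros k x. pose proof (RM (S k) z (proj1 (Hr 1 (S k) z) Hz) x) as H1.
    pose proof (C_oth z s x (length (U (S k)))).
    pose proof (C_oth z s (start U (S k)) (length (U (S k)))). lia.
Qed.

Theorem mainTheorem3 (s t : word) :
  sturmian s ->
  R_image t s ->
  (t 0 = Lb \/
   exists U : nat -> list letter,
     is_concat s U /\
     (forall i, is_prefix s (U i) /\ last (U i) Lb = La) /\
     (forall i j z, rich s z (U i) <-> rich s z (U j))) ->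
  sturmian t.
Proof.
  intros [Hnp Hbal] HR Hcase.
  pose proof (bal_balz s Hbal) as Hb.
  set (St := start (fun i => Rm (t i))).
  assert (Core : forall i j n, C Lb t j n + 2 <= C Lb t i n -> False).
  { intros i j n H.
    destruct (min_unbal t n i j H) as [i' [j' [m [Hi [Hi2 [Hj [Hj2 HB]]]]]]].
    set (B := C Lb t (S j') m) in *.
    assert (Cj : C Lb t j' (S (S m)) = B).
    { rewrite C_Sr, C_S, Hj, Hj2. unfold ind. simpl. lia. }
    assert (Ci : C Lb t i' (S (S m)) = B + 2).
    { rewrite C_Sr, C_S, Hi, Hi2, HB. unfold ind. simpl. lia. }
    pose proof (L_Cs s t HR j' (S (S m))) as Sj. rewrite Cj in Sj. fold St in Sj.
    pose proof (L_Cs s t HR i' (S (S m))) as Si. rewrite Ci in Si. fold St in Si.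
    pose proof (St_add t i' (S (S m))) as Ea. fold St in Ea. rewrite Ci in Ea.
    pose proof (L_last s t HR (i' + S m)) as La1. fold St in La1.
    replace (S (i' + S m)) with (i' + S (S m)) in La1 by lia. rewrite Ea in La1.
    assert (Si3 : C Lb s (St i') (S (S (S m) + B)) = B + 2).
    { replace (S (S m) + (B + 2)) with (S (S (S (S m) + B))) in Si by lia.
      rewrite C_Sr in Si. replace (St i' + S (S (S m) + B)) with (St i' + S (S m) + (B + 2) - 1)
        in Si by lia. rewrite La1 in Si. cbv [ind letter_eqb] in Si. lia. }
    destruct j' as [|j''].
    -
      assert (S0 : St 0 = 0) by reflexivity. rewrite S0 in Sj.
      destruct Hcase as [H0|[U [HU1 [HU2 HU3]]]].
      + congruence.
      + apply (case2 s U (S (S m) + B) B Hb Hnp HU1 HU2 HU3 Sj).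
        intro x. pose proof (Hb Lb (St i') x (S (S (S m) + B))). lia.
    - pose proof (L_last s t HR j'') as La2. fold St in La2.
      pose proof (St_S t j'') as E2. fold St in E2.
      pose proof (Hb Lb (St i') (St (S j'') - 1) (S (S (S m) + B))) as Hx.
      rewrite (C_S Lb s (St (S j'') - 1)) in Hx. replace (S (St (S j'') - 1)) with (St (S j'')) in Hx by lia.
      rewrite La2 in Hx. cbv [ind letter_eqb] in Hx. lia. }
  assert (BT : forall z i j n, C z t i n <= C z t j n + 1).
  { intros z i j n.
    destruct (le_lt_dec (C Lb t i n) (C Lb t j n + 1)) as [L|L];
    destruct (le_lt_dec (C Lb t j n) (C Lb t i n + 1)) as [L2|L2].
    - pose proof (C_oth La t i n). pose proof (C_oth La t j n). simpl oth in *.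
      destruct z; lia.
    - exfalso. apply (Core j i n). lia.
    - exfalso. apply (Core i j n). lia.
    - lia. }
  split.
  - intro Hp. apply Hnp. apply (t_aper s t HR Hp).
  - intros u v [i Hu] [j Hv] Hl x. rewrite Hu, Hv. rewrite <- !C_cnt.
    rewrite <- Hl. split; apply BT.
Qed.
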